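(* Let $A$ be a primitive axial algebra of Jordan type $\tfrac12$ and let $a,b$ be distinct $\tfrac12$-axes such that $N=N_{a,b}$ has an identity element $\mathbf 1$ and $ab=-\tfrac14\mathbf 1+\tfrac12a+\tfrac12b$. Then, for $\{x,y\}=\{a,b\}$: (1) $\dim N=3$ and $x^{\tau(y)}=\mathbf 1-x$; (2) $N_{1/2}(x)=\mathbb F(\mathbf 1-2y)$; (3) $|\tau(a)\tau(b)|\in\{2,4\}$; (4) $|\tau(a)\tau(b)|=2$ if and only if $\tau(z)=\tau(\mathbf 1-z)$ for $z\in\{a,b\}$; (5) if $|\tau(a)\tau(b)|=4$ then $\tau(a)\tau(\mathbf 1-a)=\tau(b)\tau(\mathbf 1-b)=:t$ and the center of $\langle\tau(a),\tau(b)\rangle$ is $\langle t\rangle$; (6) $\mathbf 1-a$ and $\mathbf 1-b$ are $\tfrac12$-axes, and for all $u\in\{a,\mathbf 1-a\}$, $v\in\{b,\mathbf 1-b\}$ one has $uv=-\tfrac14\mathbf 1+\tfrac12u+\tfrac12v$ and $N_{u,v}=N$.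
   Context: $\mathbb F$ is a field of characteristic $\neq 2$. For a commutative $\mathbb F$-algebra $A$, a subalgebra $N$, $x\in N$ and $\lambda\in\mathbb F$, put $N_\lambda(x)=\{y\in N: yx=\lambda y\}$ (and $A_\lambda(x)$ similarly). A $\tfrac12$-axis is an idempotent $a$ with $A=A_1(a)\oplus A_0(a)\oplus A_{1/2}(a)$, $A_1(a)=\mathbb F a$, and with $A_+(a)=A_1(a)\oplus A_0(a)$, $A_-(a)=A_{1/2}(a)$ satisfying $A_+A_+\subseteq A_+$, $A_+A_-\subseteq A_-$, $A_-A_-\subseteq A_+$, $A_0(a)A_0(a)\subseteq A_0(a)$. A primitive axial algebra of Jordan type $\tfrac12$ is a commutative algebra generated by $\tfrac12$-axes. The Miyamoto involution $\tau(a)$ is the automorphism acting as $1$ on $A_+(a)$ and $-1$ on $A_-(a)$. $N_{a,b}$ is the subalgebra generated by $a,b$; an identity element of $N$ is $\mathbf 1\in N$ with $\mathbf 1n=n$ for all $n\in N$. *)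

(* Defs.v *)
From HB Require Import structures.
From mathcomp Require Import all_boot all_order all_algebra.
From Stdlib Require Import ClassicalEpsilon.
Set Implicit Arguments. Unset Strict Implicit. Unset Printing Implicit Defensive.
Import Order.TTheory GRing.Theory Num.Theory.
Local Open Scope ring_scope.

Definition comm_alg (F : fieldType) (A : lmodType F) (mul : A -> A -> A) :=
  (forall x y, mul x y = mul y x) /\
  (forall (c : F) x y z, mul (c *: x + y) z = c *: mul x z + mul y z).

Definition eigsp (F : fieldType) (A : lmodType F) (mul : A -> A -> A)
  (x : A) (lam : F) (y : A) : Prop := mul y x = lam *: y.

Definition sub_eigsp (F : fieldType) (A : lmodType F) (mul : A -> A -> A)
  (N : A -> Prop) (x : A) (lam : F) (y : A) : Prop := N y /\ mul y x = lam *: y.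

Definition halfF (F : fieldType) : F := (2%:R)^-1.

Definition plus_part (F : fieldType) (A : lmodType F) (mul : A -> A -> A)
  (a y : A) : Prop :=
  exists y1 y0, y = y1 + y0 /\ eigsp mul a 1 y1 /\ eigsp mul a 0 y0.

Definition minus_part (F : fieldType) (A : lmodType F) (mul : A -> A -> A)
  (a y : A) : Prop := eigsp mul a (@halfF F) y.

Definition half_axis (F : fieldType) (A : lmodType F) (mul : A -> A -> A)
  (a : A) : Prop :=
  mul a a = a /\
      (forall x, exists x1 x0 xh, x = x1 + x0 + xh /\ eigsp mul a 1 x1 /\
                 eigsp mul a 0 x0 /\ eigsp mul a (@halfF F) xh) /\
      (forall y, eigsp mul a 1 y <-> exists c : F, y = c *: a) /\
      (forall y z, plus_part mul a y -> plus_part mul a z -> plus_part mul a (mul y z)) /\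
      (forall y z, plus_part mul a y -> minus_part mul a z -> minus_part mul a (mul y z)) /\
      (forall y z, minus_part mul a y -> minus_part mul a z -> plus_part mul a (mul y z)) /\
      (forall y z, eigsp mul a 0 y -> eigsp mul a 0 z -> eigsp mul a 0 (mul y z)).

Definition subalgebra (F : fieldType) (A : lmodType F) (mul : A -> A -> A)
  (S : A -> Prop) : Prop :=
  [/\ S 0, (forall (c : F) x y, S x -> S y -> S (c *: x + y))
    & (forall x y, S x -> S y -> S (mul x y))].

Definition gen_sub (F : fieldType) (A : lmodType F) (mul : A -> A -> A)
  (X : A -> Prop) (y : A) : Prop :=
  forall S, subalgebra mul S -> (forall x, X x -> S x) -> S y.

Definition N2 (F : fieldType) (A : lmodType F) (mul : A -> A -> A) (a b : A) :=
  gen_sub mul (fun x => x = a \/ x = b).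

Definition axial_half (F : fieldType) (A : lmodType F) (mul : A -> A -> A) :=
  comm_alg mul /\
  exists X : A -> Prop, (forall x, X x -> half_axis mul x) /\
                        (forall y, gen_sub mul X y).

Definition is_identity (F : fieldType) (A : lmodType F) (mul : A -> A -> A)
  (N : A -> Prop) (e : A) : Prop := N e /\ forall n, N n -> mul e n = n.

Definition has_dim (F : fieldType) (A : lmodType F) (S : A -> Prop) (n : nat) :=
  exists v : 'I_n -> A,
    [/\ forall i, S (v i),
        (forall c : 'I_n -> F, \sum_i c i *: v i = 0 -> forall i, c i = 0)
      & (forall y, S y -> exists c : 'I_n -> F, y = \sum_i c i *: v i)].

(* Miyamoto involution: x = x_+ + x_-  |->  x_+ - x_-  (x_+ in A_+(a),
   x_- in A_-(a)); the decomposition is chosen by Hilbert's epsilon, and is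
   unique whenever a is a 1/2-axis. *)
Definition tau (F : fieldType) (A : lmodType F) (mul : A -> A -> A)
  (a : A) (x : A) : A :=
  epsilon (inhabits (0 : A)) (fun y => exists p m, x = p + m /\
     plus_part mul a p /\ minus_part mul a m /\ y = p - m).

Definition fun_order (A : Type) (g : A -> A) (n : nat) : Prop :=
  [/\ (0 < n)%N, (forall x, iter n g x = x)
    & (forall m, (0 < m < n)%N -> exists x, iter m g x <> x)].

Definition gen_group (A : Type) (X : (A -> A) -> Prop) (h : A -> A) : Prop :=
  forall H : (A -> A) -> Prop,
    (forall g, X g -> H g) -> H id ->
    (forall u v, H u -> H v -> H (u \o v)) ->
    (forall u v, H u -> cancel u v -> cancel v u -> H v) -> H h.

(* group product in right-action convention: (g h) = apply g first, then h *)
Definition gprod (A : Type) (g h : A -> A) : A -> A := h \o g.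

(* Main.v *)
Require Import Defs.
From HB Require Import structures.
From mathcomp Require Import all_boot all_order all_algebra.
From mathcomp Require Import ring zify.
From Stdlib Require Import ClassicalEpsilon Classical FunctionalExtensionality.
Import GRing.Theory.
Set Implicit Arguments. Unset Strict Implicit. Unset Printing Implicit Defensive.

Section Grp.
Variables (T : Type) (ta tb : T -> T).
Hypotheses (ia : forall x, ta (ta x) = x) (ib : forall x, tb (tb x) = x).
Hypothesis R2 : forall x, tb (ta (tb (ta x))) = ta (tb (ta (tb x))).
Variable x0 : T.
Hypothesis Hx0 : tb (ta x0) <> x0.

Local Notation s := (gprod ta tb).
Local Notation t := (gprod ta (fun x => tb (ta (tb x)))).
Local Notation D := (gen_group (fun g => g = ta \/ g = tb)).

Lemma s4 x : iter 4 s x = x.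
Proof. by rewrite /= /gprod /= R2 !(ia, ib). Qed.

Lemma G3 : fun_order s 2 \/ fun_order s 4.
Proof.
case: (classic (forall x, iter 2 s x = x)) => Hs.
  by left; split; [by [] | exact: Hs | case=> [|[|m]] //= _; exists x0].
right; split; [by [] | exact: s4 | move=> m Hm].
apply: NNPP => Hn.
have Hall : forall y, iter m s y = y.
  by move=> y; apply: NNPP => Hy; apply: Hn; exists y.
apply: Hs => x; clear Hn.
move: Hm Hall; case: m => [|[|[|[|m]]]] // _ Hall.
- by have H1 : forall y, s y = y := Hall; rewrite /= !H1.
- have Hs1 : forall y, s y = y.
    by move=> y; rewrite -{1}(Hall y) -[RHS](s4 y).
  by rewrite /= !Hs1.
Qed.

Lemma G4 : fun_order s 2 <->
  (forall x, ta x = tb (ta (tb x))) /\ (forall x, tb x = ta (tb (ta x))).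
Proof.
split.
  move=> [_ H _]; split=> x.
    by have := H (ta x); rewrite /= /gprod /= ia => ->.
  by have := H (tb x); rewrite /= /gprod /= R2 ib => ->.
move=> [Ea _]; split; first by [].
  by move=> x; rewrite /= /gprod /= -Ea ia.
by move=> [|[|m]] //= _; exists x0.
Qed.

Lemma ta_s y : ta (s y) = iter 3 s (ta y).
Proof. by rewrite /= /gprod /= ia R2 ib. Qed.

Lemma ta_iter j y : ta (iter j s y) = iter (3 * j) s (ta y).
Proof.
elim: j => [|j IH] //.
by rewrite iterS ta_s IH mulnS iterD.
Qed.

Lemma iter4m q y : iter (q * 4) s y = y.
Proof. by elim: q => [|q IH] //; rewrite mulSn iterD IH s4. Qed.

Lemma iter_mod k y : iter k s y = iter (k %% 4) s y.
Proof. by rewrite {1}(divn_eq k 4) addnC iterD iter4m. Qed.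

Definition Dp (h : T -> T) := exists k (eps : bool), forall x, h x = iter k s (if eps then ta x else x).

Lemma D_Dp h : D h -> Dp h.
Proof.
apply.
- move=> g [->|->]; first by exists 0, true.
  by exists 1, true => x /=; rewrite /gprod /= ia.
- by exists 0, false.
- move=> u v [k [ep Hu]] [j [dl Hv]].
  case: ep Hu => Hu.
    exists (k + 3 * j), (~~ dl) => x /=; rewrite Hu Hv ta_iter iterD.
    by case: dl {Hv} => //=; rewrite ia.
  by exists (k + j), dl => x /=; rewrite Hu Hv iterD.
- move=> u v [k [ep Hu]] cuv cvu.
  have k4 : k + 3 * k = k * 4 by lia.
  case: ep Hu => Hu.
    have Huw : forall x, u (iter k s (ta x)) = x.
      by move=> x; rewrite Hu ta_iter ia -iterD k4 iter4m.
    by exists k, true => x; rewrite -{1}(Huw x) cuv.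
  have Huw : forall x, u (iter (3 * k) s x) = x.
    by move=> x; rewrite Hu -iterD k4 iter4m.
  by exists (3 * k), false => x; rewrite -{1}(Huw x) cuv.
Qed.

Lemma Da : D ta. Proof. by move=> H HX _ _ _; apply: HX; left. Qed.
Lemma Db : D tb. Proof. by move=> H HX _ _ _; apply: HX; right. Qed.
Lemma Did : D id. Proof. by move=> H _ Hid _ _. Qed.
Lemma Dcomp u v : D u -> D v -> D (u \o v).
Proof. by move=> Du Dv H HX Hid Hc Hi; apply: (Hc); [exact: (Du H HX Hid Hc Hi)|exact: (Dv H HX Hid Hc Hi)]. Qed.

Lemma comm_s2 : (forall x, ta (tb x) = tb (ta x)) -> forall x, iter 2 s x = x.
Proof. by move=> Hc x; rewrite /= /gprod /= -Hc ib ia. Qed.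

Lemma G5 : fun_order s 4 -> forall h,
  (D h /\ forall k, D k -> h \o k = k \o h) <-> gen_group (fun g => g = t) h.
Proof.
move=> [_ _ Hm] h; have [xs Hxs] := Hm 2 isT.
have Hbad : ~ (forall x, ta (tb x) = tb (ta x)).
  by move=> Hc; apply: Hxs; apply: comm_s2.
split.
  move=> [Dh Hc].
  have Ca x : h (ta x) = ta (h x) by have := congr1 (fun f => f x) (Hc ta Da).
  have Cb x : h (tb x) = tb (h x) by have := congr1 (fun f => f x) (Hc tb Db).
  suff : (forall x, h x = x) \/ (forall x, h x = t x).
    case=> Hh H Hg Hid _ _.
      have -> : h = id by apply: functional_extensionality => x; rewrite Hh.
      exact: Hid.
    have -> : h = t by apply: functional_extensionality => x; rewrite Hh.
    by apply: Hg.
  have [k [ep Hh]] := D_Dp Dh.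
  have Hh' : forall x, h x = iter (k %% 4) s (if ep then ta x else x).
    by move=> x; rewrite Hh -iter_mod.
  have : k %% 4 < 4 by rewrite ltn_pmod.
  move: (k %% 4) Hh' => k' Hh' Hk4; clear Hh.
  case: k' Hh' Hk4 => [|[|[|[|k']]]] Hh' // _; case: ep Hh' => Hh'.
  - by exfalso; apply: Hbad => x; have := Cb x; rewrite !Hh' /=.
  - by left => x; rewrite Hh'.
  - exfalso; apply: Hbad => x.
    by have := Ca x; rewrite !Hh' /= /gprod /= !ia => ->.
  - exfalso; apply: Hbad => x.
    by have := Ca (ta x); rewrite !Hh' /= /gprod /= !ia => ->.
  - exfalso; apply: Hbad => x.
    by have := Cb x; rewrite !Hh' /= /gprod /= !ia !ib => ->.
  - by right => x; rewrite Hh'.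
  - exfalso; apply: Hbad => x.
    have H3 : forall y, h y = ta (tb (ta y)).
      by move=> y; rewrite Hh' /= /gprod /= ia R2 ib.
    by have := Ca x; rewrite !H3 !ia => ->.
  - exfalso; apply: Hbad => x.
    have H3 : forall y, h y = ta (tb y).
      by move=> y; rewrite Hh' /= /gprod /= R2 ib ia.
    by have := congr1 ta (Ca x); rewrite !H3 !ia => E; rewrite E.
move=> Hg.
have tt : forall y, t (t y) = y := s4.
have : (forall x, h x = x) \/ (forall x, h x = t x).
  apply: (Hg (fun g => (forall x, g x = x) \/ (forall x, g x = t x))).
  - by move=> g ->; right.
  - by left.
  - move=> u v [Hu|Hu] [Hv|Hv]; [left|right|right|left] => x /=; rewrite ?Hu ?Hv //.
  - move=> u v [Hu|Hu] cuv cvu; [left|right] => x.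
      by have := cvu x; rewrite Hu.
    by have := congr1 t (cvu x); rewrite Hu tt.
have Dt : D t.
  by have := Dcomp (Dcomp Db Da) (Dcomp Db Da).
have Ht : forall k, D k -> forall x, t (k x) = k (t x).
  move=> k Dk; apply: (Dk (fun k => forall x, t (k x) = k (t x))).
  - move=> g [->|->] x /=; rewrite /gprod /=.
      by rewrite -R2 ia.
    by rewrite R2 !ib.
  - by [].
  - by move=> u v Hu Hv x /=; rewrite Hu Hv.
  - by move=> u v Hu cuv cvu x; rewrite -{2}(cvu x) Hu cuv.
case=> Hh.
  have -> : h = id by apply: functional_extensionality => x; rewrite Hh.
  by split; [exact: Did | move=> k _; apply: functional_extensionality].
have -> : h = t by apply: functional_extensionality => x; rewrite Hh.
split=> // k Dk; apply: functional_extensionality => x /=.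
by rewrite Ht.
Qed.
End Grp.
Local Open Scope ring_scope.
Lemma sum3 (V : zmodType) (f : 'I_3 -> V) : \sum_i f i = f (inord 0) + f (inord 1) + f (inord 2).
Proof.
rewrite !big_ord_recl big_ord0 addr0 addrA.
by congr (f _ + f _ + f _); apply/val_inj; rewrite /= inordK.
Qed.
Section Basic.
Variables (F : fieldType) (A : lmodType F) (mul : A -> A -> A).
Hypothesis HA : Defs.comm_alg mul.
Hypothesis H2 : (2%:R : F) != 0.

Lemma mulC x y : mul x y = mul y x. Proof. by case: HA. Qed.
Lemma mul_lin c x y z : mul (c *: x + y) z = c *: mul x z + mul y z.
Proof. by case: HA. Qed.
Lemma mul0l z : mul 0 z = 0.
Proof.
have := mul_lin 1 0 0 z; rewrite !scale1r addr0.
by move/(congr1 (fun w => w - mul 0 z)); rewrite subrr addrK => <-.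
Qed.
Lemma mul0r z : mul z 0 = 0. Proof. by rewrite mulC mul0l. Qed.
Lemma mulDl x y z : mul (x + y) z = mul x z + mul y z.
Proof. by have := mul_lin 1 x y z; rewrite !scale1r. Qed.
Lemma mulZl c x z : mul (c *: x) z = c *: mul x z.
Proof. by have := mul_lin c x 0 z; rewrite !addr0 mul0l addr0. Qed.
Lemma mulNl x z : mul (- x) z = - mul x z.
Proof. by rewrite -scaleN1r mulZl scaleN1r. Qed.
Lemma mulBl x y z : mul (x - y) z = mul x z - mul y z.
Proof. by rewrite mulDl mulNl. Qed.
Lemma mulDr x y z : mul z (x + y) = mul z x + mul z y.
Proof. by rewrite !(mulC z) mulDl. Qed.
Lemma mulZr c x z : mul z (c *: x) = c *: mul z x.
Proof. by rewrite !(mulC z) mulZl. Qed.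
Lemma mulNr x z : mul z (- x) = - mul z x.
Proof. by rewrite !(mulC z) mulNl. Qed.
Lemma mulBr x y z : mul z (x - y) = mul z x - mul z y.
Proof. by rewrite !(mulC z) mulBl. Qed.

Local Notation hf := (halfF F).
Lemma hf_neq0 : hf != 0.
Proof. by rewrite /halfF invr_eq0. Qed.
Lemma hfh : 1 - hf = hf.
Proof. rewrite /halfF; field. done. Qed.

Lemma eig_lin a l c x y : eigsp mul a l x -> eigsp mul a l y -> eigsp mul a l (c *: x + y).
Proof.
rewrite /eigsp => Hx Hy; rewrite mul_lin Hx Hy scalerDr !scalerA mulrC //.
Qed.
Lemma eig0 a l : eigsp mul a l 0.
Proof. by rewrite /eigsp mul0l scaler0. Qed.

Lemma P_lin a c x y : plus_part mul a x -> plus_part mul a y -> plus_part mul a (c *: x + y).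
Proof.
move=> [x1 [x0 [-> [H1 H0]]]] [y1 [y0 [-> [K1 K0]]]].
exists (c *: x1 + y1), (c *: x0 + y0); split; last by split; apply: eig_lin.
by rewrite scalerDr addrACA.
Qed.
Lemma P0 a : plus_part mul a 0.
Proof. by exists 0, 0; rewrite addr0; split=> //; split; apply: eig0. Qed.
Lemma P_add a x y : plus_part mul a x -> plus_part mul a y -> plus_part mul a (x + y).
Proof. by move=> Hx Hy; have := P_lin 1 Hx Hy; rewrite scale1r. Qed.
Lemma P_scale a c x : plus_part mul a x -> plus_part mul a (c *: x).
Proof. by move=> Hx; have := P_lin c Hx (P0 a); rewrite addr0. Qed.
Lemma P_opp a x : plus_part mul a x -> plus_part mul a (- x).
Proof. by move=> Hx; rewrite -scaleN1r; apply: P_scale. Qed.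
Lemma M_add a x y : minus_part mul a x -> minus_part mul a y -> minus_part mul a (x + y).
Proof. by move=> Hx Hy; have := eig_lin 1 Hx Hy; rewrite scale1r. Qed.
Lemma M_scale a c x : minus_part mul a x -> minus_part mul a (c *: x).
Proof. by move=> Hx; have := eig_lin c Hx (eig0 a _); rewrite addr0. Qed.
Lemma M_opp a x : minus_part mul a x -> minus_part mul a (- x).
Proof. by move=> Hx; rewrite -scaleN1r; apply: M_scale. Qed.

Lemma PM_inter a y : plus_part mul a y -> minus_part mul a y -> y = 0.
Proof.
move=> [y1 [y0 [Ey [H1 H0]]]]; rewrite /minus_part /eigsp => Hm.
move: H1 H0; rewrite /eigsp scale1r scale0r => H1 H0.
have e1 : y1 = hf *: y1 + hf *: y0.
  by rewrite -scalerDr -Ey -Hm Ey mulDl H1 H0 addr0.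
have : (1 - hf) *: y1 = hf *: y0.
  by rewrite scalerBl scale1r {1}e1 addrAC subrr add0r.
rewrite hfh => /(scalerI hf_neq0) E10.
have y00 : y0 = 0 by rewrite -H0 -E10 H1.
by rewrite Ey E10 y00 addr0.
Qed.

Lemma ha_dec a : half_axis mul a -> forall x, exists p m,
  x = p + m /\ plus_part mul a p /\ minus_part mul a m.
Proof.
move=> [_ [Hd _]] x; have [x1 [x0 [xh [-> [H1 [H0 Hh]]]]]] := Hd x.
by exists (x1 + x0), xh; split=> //; split=> //; exists x1, x0.
Qed.

Lemma tau_spec a x p m : half_axis mul a -> x = p + m -> plus_part mul a p ->
  minus_part mul a m -> tau mul a x = p - m.
Proof.
move=> Ha Ex Hp Hm; rewrite /tau.
have [p' [m' [Ex' [Hp' Hm']]]] := ha_dec Ha x.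
have := epsilon_spec (inhabits (0:A)) (fun y => exists p m, x = p + m /\
     plus_part mul a p /\ minus_part mul a m /\ y = p - m).
case=> [|p2 [m2 [E2 [Hp2 [Hm2 ->]]]]]; first by exists (p' - m'), p', m'.
have E' : p + m = p2 + m2 by rewrite -Ex -E2.
have D : p - p2 = m2 - m.
  by rewrite -[p](addrK m) E' -[p2 + m2 - m]addrA addrC addrK.
have H0 := PM_inter (P_add Hp (P_opp Hp2)) (eq_ind_r _ (M_add Hm2 (M_opp Hm)) D).
have ep : p2 = p by apply/eqP; rewrite eq_sym -subr_eq0 H0.
move: D; rewrite H0 ep => /eqP; rewrite eq_sym subr_eq0 => /eqP ->.
by [].
Qed.

Lemma tau_lin a c x y : half_axis mul a ->
  tau mul a (c *: x + y) = c *: tau mul a x + tau mul a y.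
Proof.
move=> Ha.
have [px [mx [Ex [Hpx Hmx]]]] := ha_dec Ha x.
have [py [my [Ey [Hpy Hmy]]]] := ha_dec Ha y.
rewrite (tau_spec Ha Ex Hpx Hmx) (tau_spec Ha Ey Hpy Hmy).
rewrite (tau_spec (p := c *: px + py) (m := c *: mx + my) Ha); last first.
- exact: eig_lin.
- exact: P_lin.
- by rewrite Ex Ey scalerDr addrACA.
by rewrite scalerBr opprD addrACA.
Qed.

Lemma tau0 a : half_axis mul a -> tau mul a 0 = 0.
Proof. by move=> Ha; rewrite (tau_spec (p := 0) (m := 0) Ha) ?subr0 ?addr0 //; [apply: P0|apply: eig0]. Qed.
Lemma tauD a x y : half_axis mul a -> tau mul a (x + y) = tau mul a x + tau mul a y.
Proof. by move=> Ha; have := tau_lin 1 x y Ha; rewrite !scale1r. Qed.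
Lemma tauZ a c x : half_axis mul a -> tau mul a (c *: x) = c *: tau mul a x.
Proof. by move=> Ha; have := tau_lin c x 0 Ha; rewrite !addr0 tau0 // addr0. Qed.
Lemma tauN a x : half_axis mul a -> tau mul a (- x) = - tau mul a x.
Proof. by move=> Ha; rewrite -scaleN1r tauZ // scaleN1r. Qed.
Lemma tauB a x y : half_axis mul a -> tau mul a (x - y) = tau mul a x - tau mul a y.
Proof. by move=> Ha; rewrite tauD // tauN. Qed.

Lemma tau_mul a x y : half_axis mul a ->
  tau mul a (mul x y) = mul (tau mul a x) (tau mul a y).
Proof.
move=> Ha.
have [px [mx [Ex [Hpx Hmx]]]] := ha_dec Ha x.
have [py [my [Ey [Hpy Hmy]]]] := ha_dec Ha y.
have Ha' := Ha; move: Ha' => [_ [_ [_ [Hpp [Hpm [Hmm _]]]]]].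
rewrite (tau_spec Ha Ex Hpx Hmx) (tau_spec Ha Ey Hpy Hmy).
rewrite (tau_spec (p := mul px py + mul mx my) (m := mul px my + mul mx py) Ha); last first.
- apply: M_add; first exact: Hpm.
  by rewrite mulC; apply: Hpm.
- by apply: P_add; [apply: Hpp | apply: Hmm].
- by rewrite Ex Ey mulDl !mulDr [mul mx py + _]addrC addrACA.
by rewrite mulBl !mulBr opprD opprB addrACA.
Qed.

Lemma tau_inv a x : half_axis mul a -> tau mul a (tau mul a x) = x.
Proof.
move=> Ha; have [p [m [Ex [Hp Hm]]]] := ha_dec Ha x.
rewrite (tau_spec Ha Ex Hp Hm) (tau_spec (p := p) (m := - m) Ha) //.
  by rewrite opprK.
exact: M_opp.
Qed.

Lemma eig_tr c a l y : half_axis mul c ->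
  eigsp mul (tau mul c a) l y <-> eigsp mul a l (tau mul c y).
Proof.
move=> Hc; rewrite /eigsp; split=> H.
  by rewrite -(tau_inv a Hc) -tau_mul // H tauZ.
by rewrite -(tau_inv (mul y _) Hc) tau_mul // tau_inv // H tauZ // tau_inv.
Qed.

Lemma P_tr c a y : half_axis mul c ->
  plus_part mul (tau mul c a) y <-> plus_part mul a (tau mul c y).
Proof.
move=> Hc; split.
  move=> [y1 [y0 [-> [H1 H0]]]]; exists (tau mul c y1), (tau mul c y0).
  by rewrite tauD //; split=> //; split; apply/(eig_tr _ _ _ Hc).
move=> [y1 [y0 [Ey [H1 H0]]]]; exists (tau mul c y1), (tau mul c y0).
rewrite -tauD // -Ey tau_inv //; split=> //; split; apply/(eig_tr _ _ _ Hc);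
  by rewrite tau_inv.
Qed.

Lemma ha_tr c a : half_axis mul c -> half_axis mul a -> half_axis mul (tau mul c a).
Proof.
move=> Hc [Hi [Hd [H1 [Hpp [Hpm [Hmm H00]]]]]].
have Tr := fun l y => eig_tr a l y Hc.
have Pr := fun y => P_tr a y Hc.
split; first by rewrite -tau_mul // Hi.
split.
  move=> x; have [x1 [x0 [xh [Ex [K1 [K0 Kh]]]]]] := Hd (tau mul c x).
  exists (tau mul c x1), (tau mul c x0), (tau mul c xh).
  split; first by rewrite -!tauD // -Ex tau_inv.
  by split; [|split]; apply/Tr; rewrite tau_inv.
split.
  move=> y; rewrite Tr H1; split=> [[k Hk]|[k Hk]]; exists k.
    by rewrite -(tau_inv y Hc) Hk tauZ.
  by rewrite Hk tauZ // tau_inv.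
split.
  by move=> y z /Pr Hy /Pr Hz; apply/Pr; rewrite tau_mul //; apply: Hpp.
split.
  move=> y z /Pr Hy; rewrite /minus_part => /Tr Hz.
  by apply/Tr; rewrite tau_mul //; apply: Hpm.
split.
  rewrite /minus_part => y z /Tr Hy /Tr Hz.
  by apply/Pr; rewrite tau_mul //; apply: Hmm.
by move=> y z /Tr Hy /Tr Hz; apply/Tr; rewrite tau_mul //; apply: H00.
Qed.

Lemma tau_conj c a x : half_axis mul c -> half_axis mul a ->
  tau mul (tau mul c a) x = tau mul c (tau mul a (tau mul c x)).
Proof.
move=> Hc Ha.
have [p [m [Ex [Hp Hm]]]] := ha_dec Ha (tau mul c x).
rewrite (tau_spec Ha Ex Hp Hm) (tau_spec (p := tau mul c p) (m := tau mul c m)).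
- by rewrite tauB.
- exact: ha_tr.
- by rewrite -tauD // -Ex tau_inv.
- by apply/(P_tr _ _ Hc); rewrite tau_inv.
- by apply/(eig_tr _ _ _ Hc); rewrite tau_inv.
Qed.

Lemma gs_sub X : subalgebra mul (gen_sub mul X).
Proof.
split.
- by move=> S [].
- by move=> c x y Hx Hy S HS HX; case: (HS) => _ Hl _; apply: Hl; [apply: Hx|apply: Hy].
- by move=> x y Hx Hy S HS HX; case: (HS) => _ _ Hm; apply: Hm; [apply: Hx|apply: Hy].
Qed.
Lemma gs_in X x : X x -> gen_sub mul X x.
Proof. by move=> Hx S _ HX; apply: HX. Qed.
Lemma gs_lin X c x y : gen_sub mul X x -> gen_sub mul X y -> gen_sub mul X (c *: x + y).
Proof. by case: (@gs_sub X) => _ H _; apply: H. Qed.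
Lemma gs_mul X x y : gen_sub mul X x -> gen_sub mul X y -> gen_sub mul X (mul x y).
Proof. by case: (@gs_sub X) => _ _ H; apply: H. Qed.
Lemma gs0 X : gen_sub mul X 0.
Proof. by case: (@gs_sub X). Qed.
Lemma gs_add X x y : gen_sub mul X x -> gen_sub mul X y -> gen_sub mul X (x + y).
Proof. by move=> Hx Hy; have := gs_lin 1 Hx Hy; rewrite scale1r. Qed.
Lemma gs_scale X c x : gen_sub mul X x -> gen_sub mul X (c *: x).
Proof. by move=> Hx; have := gs_lin c Hx (@gs0 X); rewrite addr0. Qed.
Lemma gs_opp X x : gen_sub mul X x -> gen_sub mul X (- x).
Proof. by move=> Hx; rewrite -scaleN1r; apply: gs_scale. Qed.
Lemma gs_min X S y : subalgebra mul S -> (forall x, X x -> S x) -> gen_sub mul X y -> S y.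
Proof. by move=> HS HX Hy; apply: Hy. Qed.
Lemma gs_ext X Y y : (forall x, X x <-> Y x) -> gen_sub mul X y -> gen_sub mul Y y.
Proof. by move=> HXY Hy S HS HY; apply: Hy => // x /HXY; apply: HY. Qed.

Section Spec.
Variables (e a b : A).
Hypotheses (Ha : half_axis mul a) (Hb : half_axis mul b) (Hab : a != b).
Hypotheses (Hea : mul e a = a) (Heb : mul e b = b) (Hee : mul e e = e).
Hypothesis Hmab : mul a b = - ((4%:R : F)^-1 *: e) + hf *: a + hf *: b.

Definition cmb (x y z : F) := x *: e + y *: a + z *: b.
Lemma ecmb : e = cmb 1 0 0. Proof. by rewrite /cmb !scale1r !scale0r !addr0. Qed.
Lemma acmb : a = cmb 0 1 0. Proof. by rewrite /cmb !scale1r !scale0r addr0 add0r. Qed.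
Lemma bcmb : b = cmb 0 0 1. Proof. by rewrite /cmb !scale1r !scale0r !add0r. Qed.
Lemma cmb0 : (0 : A) = cmb 0 0 0. Proof. by rewrite /cmb !scale0r !addr0. Qed.
Lemma cmbD x y z x' y' z' : cmb x y z + cmb x' y' z' = cmb (x + x') (y + y') (z + z').
Proof. by rewrite /cmb !scalerDl addrACA (addrACA (x *: e)). Qed.
Lemma cmbZ k x y z : k *: cmb x y z = cmb (k * x) (k * y) (k * z).
Proof. by rewrite /cmb !scalerDr !scalerA. Qed.
Lemma cmbN x y z : - cmb x y z = cmb (- x) (- y) (- z).
Proof. by rewrite -scaleN1r cmbZ !mulN1r. Qed.
Lemma cmb_eq x y z x' y' z' : x = x' -> y = y' -> z = z' -> cmb x y z = cmb x' y' z'.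
Proof. by move=> -> -> ->. Qed.
Lemma mulcmb x y z x' y' z' : mul (cmb x y z) (cmb x' y' z') =
  cmb (x * x' - (4%:R)^-1 * (y * z' + z * y'))
      (x * y' + y * x' + y * y' + hf * (y * z' + z * y'))
      (x * z' + z * x' + z * z' + hf * (y * z' + z * y')).
Proof.
have Hae : mul a e = a by rewrite mulC.
have Hbe : mul b e = b by rewrite mulC.
have Hba : mul b a = mul a b by rewrite mulC.
have Haa : mul a a = a by case: Ha.
have Hbb : mul b b = b by case: Hb.
rewrite {1}/cmb !mulDl !mulZl /cmb !mulDr !mulZr Hee Hea Heb Hae Haa Hbe Hba Hbb Hmab.
rewrite [e]ecmb [a]acmb [b]bcmb.
rewrite ?(cmbD, cmbN, cmbZ); apply: cmb_eq; ring.
Qed.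

Lemma H4 : (4%:R : F) != 0.
Proof. by rewrite (_ : 4%:R = 2%:R * 2%:R) ?mulf_neq0 // -natrM. Qed.

Ltac nrm := rewrite ?ecmb ?acmb ?bcmb ?cmb0; rewrite ?(cmbD, cmbN, cmbZ, mulcmb);
  apply: cmb_eq; rewrite /halfF; field; rewrite ?H2 ?H4 //.

Lemma F1 : mul (e - 2%:R *: b) a = hf *: (e - 2%:R *: b).
Proof. nrm. Qed.

Lemma NZv : cmb (-1) 0 2%:R != 0.
Proof.
apply/eqP => Hv.
have E1 : e = mul (cmb (-1) 0 2%:R) (cmb (-1) 0 2%:R) by nrm.
rewrite Hv mul0l in E1.
have E2 : a = hf *: mul (cmb (-1) 2%:R 0) e + hf *: e by nrm.
have E3 : b = hf *: mul (cmb (-1) 0 2%:R) e + hf *: e by nrm.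
rewrite E1 !mul0r !scaler0 !addr0 in E2 E3.
by move: Hab; rewrite E2 E3 eqxx.
Qed.

Lemma NZa : a != 0.
Proof.
apply/eqP => H0.
have E : cmb (-1) 0 2%:R = 2%:R *: mul a (cmb (-1) 0 2%:R) by nrm.
by move: NZv; rewrite E H0 mul0l scaler0 eqxx.
Qed.

Lemma NZea : e - a != 0.
Proof.
rewrite subr_eq0; apply/eqP => He.
have E : cmb (-1) 0 2%:R = 2%:R *: mul e (cmb (-1) 0 2%:R) - 2%:R *: mul a (cmb (-1) 0 2%:R)
  by nrm.
by move: NZv; rewrite E He subrr eqxx.
Qed.

Lemma NZe2b : e - 2%:R *: b != 0.
Proof.
apply/eqP => H0.
have E : cmb (-1) 0 2%:R = - (e - 2%:R *: b) by nrm.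
by move: NZv; rewrite E H0 oppr0 eqxx.
Qed.

Lemma Pa_a : plus_part mul a a.
Proof.
exists a, 0; rewrite addr0; split=> //; split; last exact: eig0.
by rewrite /eigsp scale1r; case: Ha.
Qed.
Lemma Pa_ea : plus_part mul a (e - a).
Proof.
exists 0, (e - a); rewrite add0r; split=> //; split; first exact: eig0.
rewrite /eigsp scale0r; nrm.
Qed.
Lemma Pa_e : plus_part mul a e.
Proof. by have := P_add Pa_a Pa_ea; rewrite addrC subrK. Qed.
Lemma Ma_e2b : minus_part mul a (e - 2%:R *: b).
Proof. exact: F1. Qed.

Lemma indep c0 c1 c2 : c0 *: a + c1 *: (e - a) + c2 *: (e - 2%:R *: b) = 0 ->
  [/\ c0 = 0, c1 = 0 & c2 = 0].
Proof.
move=> Hs.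
have Hp : plus_part mul a (c0 *: a + c1 *: (e - a)).
  by apply: P_add; apply: P_scale; [exact: Pa_a | exact: Pa_ea].
have Hm : minus_part mul a (c0 *: a + c1 *: (e - a)).
  have -> : c0 *: a + c1 *: (e - a) = - (c2 *: (e - 2%:R *: b)).
    by rewrite -[LHS](addrK (c2 *: (e - 2%:R *: b))) Hs add0r.
  by apply: M_opp; apply: M_scale; exact: Ma_e2b.
have Z := PM_inter Hp Hm.
move: Hs; rewrite Z add0r => /eqP; rewrite scaler_eq0 (negbTE NZe2b) orbF => /eqP c20.
have : mul (c0 *: a + c1 *: (e - a)) a = c0 *: a by nrm.
rewrite Z mul0l => /esym/eqP; rewrite scaler_eq0 (negbTE NZa) orbF => /eqP c00.
move: Z; rewrite c00 scale0r add0r => /eqP; rewrite scaler_eq0 (negbTE NZea) orbF => /eqP c10.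
by [].
Qed.

Lemma tab : tau mul a b = e - b.
Proof.
rewrite (tau_spec (p := hf *: e) (m := - (hf *: (e - 2%:R *: b)))) //.
- nrm.
- nrm.
- exact: P_scale Pa_e.
- by apply: M_opp; apply: M_scale; exact: Ma_e2b.
Qed.
Lemma tae : tau mul a e = e.
Proof.
by rewrite (tau_spec (p := e) (m := 0)) ?addr0 ?subr0 //; [exact: Pa_e| exact: eig0].
Qed.
Lemma taa : tau mul a a = a.
Proof.
by rewrite (tau_spec (p := a) (m := 0)) ?addr0 ?subr0 //; [exact: Pa_a| exact: eig0].
Qed.
Lemma taeb : tau mul a (e - b) = b.
Proof. by rewrite tauB // tab tae opprB addrC subrK. Qed.

Lemma U1 : mul (e - a) b = - ((4%:R : F)^-1 *: e) + hf *: (e - a) + hf *: b.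
Proof. nrm. Qed.
Lemma U2 : mul a (e - b) = - ((4%:R : F)^-1 *: e) + hf *: a + hf *: (e - b).
Proof. nrm. Qed.
Lemma U3 : mul (e - a) (e - b) = - ((4%:R : F)^-1 *: e) + hf *: (e - a) + hf *: (e - b).
Proof. nrm. Qed.

Hypothesis HNe : N2 mul a b e.
Lemma Na : N2 mul a b a. Proof. by apply: gs_in; left. Qed.
Lemma Nb : N2 mul a b b. Proof. by apply: gs_in; right. Qed.

Lemma span z : N2 mul a b z <-> exists x y w, z = cmb x y w.
Proof.
split.
  move=> Hz; apply: (gs_min (S := fun z => exists x y w, z = cmb x y w) _ _ Hz).
    split; first by exists 0, 0, 0; rewrite -cmb0.
      by move=> c _ _ [x [y [w ->]]] [x' [y' [w' ->]]]; eexists _, _, _; rewrite cmbZ cmbD.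
    by move=> _ _ [x [y [w ->]]] [x' [y' [w' ->]]]; eexists _, _, _; rewrite mulcmb.
  by move=> x [->|->]; [exists 0, 1, 0; exact: acmb|exists 0, 0, 1; exact: bcmb].
move=> [x [y [w ->]]]; rewrite /cmb.
by apply: gs_add; [apply: gs_add|]; apply: gs_scale; [exact: HNe|exact: Na|exact: Nb].
Qed.

Definition bas (i : 'I_3) : A :=
  match val i with 0 => a | 1 => e - a | _ => e - 2%:R *: b end.

Lemma hasdim : has_dim (N2 mul a b) 3.
Proof.
exists bas; split.
- move=> [[|[|[|k]]] Hk] //=; rewrite /bas /=.
  + exact: Na.
  + by apply: gs_add; [exact: HNe | apply: gs_opp; exact: Na].
  + by apply: gs_add; [exact: HNe | apply: gs_opp; apply: gs_scale; exact: Nb].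
- move=> c; rewrite sum3 /bas /= !inordK // => /indep [H0 H1 H2'] i.
  rewrite -(inord_val i); case: i => [[|[|[|k]]] Hk] //=.
- move=> y /span [x [y' [w ->]]].
  exists (fun i : 'I_3 => match val i with 0 => x + y' + hf * w | 1 => x + hf * w | _ => - (hf * w) end).
  rewrite sum3 /bas /= !inordK //; nrm.
Qed.

Lemma eig_half z : sub_eigsp mul (N2 mul a b) a hf z <->
   exists k, z = k *: (e - 2%:R *: b).
Proof.
split.
  move=> [/span [x [y [w Ez]]] Hza].
  have E : mul (cmb x y w) a - hf *: cmb x y w =
     ((x + y + hf * w) * (1 - hf)) *: a + (- (hf * (x + hf * w))) *: (e - a)
       + 0 *: (e - 2%:R *: b) by nrm.
  rewrite -Ez Hza subrr in E.
  have [/eqP c0 /eqP c1 _] := indep (esym E).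
  move: c0; rewrite mulf_eq0 hfh (negbTE hf_neq0) orbF => /eqP c0.
  move: c1; rewrite oppr_eq0 mulf_eq0 (negbTE hf_neq0) /= => /eqP c1.
  have y0 : y = 0.
    have -> : y = (x + y + hf * w) - (x + hf * w) by ring.
    by rewrite c0 c1 subrr.
  have x0 : x = - (hf * w).
    have -> : x = (x + hf * w) - hf * w by ring.
    by rewrite c1 sub0r.
  by exists (- (hf * w)); rewrite Ez x0 y0; nrm.
move=> [k ->]; split.
  by apply/span; exists k, 0, (- (2%:R * k)); nrm.
rewrite /eigsp; nrm.
Qed.

Lemma N2eq u v : (u = a \/ u = e - a) -> (v = b \/ v = e - b) ->
  forall z, N2 mul u v z <-> N2 mul a b z.
Proof.
move=> Hu Hv.
have Nu : N2 mul a b u.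
  by case: Hu => ->; [exact: Na| apply: gs_add; [exact: HNe| apply: gs_opp; exact: Na]].
have Nv : N2 mul a b v.
  by case: Hv => ->; [exact: Nb| apply: gs_add; [exact: HNe| apply: gs_opp; exact: Nb]].
have He' : e = 2%:R *: u + 2%:R *: v - 4%:R *: mul u v.
  by case: Hu => ->; case: Hv => ->; nrm.
have Ne : N2 mul u v e.
  rewrite He'; apply: gs_add; [apply: gs_add|apply: gs_opp]; apply: gs_scale;
  by [apply: gs_in; left | apply: gs_in; right | apply: gs_mul; apply: gs_in; [left|right]].
have Na' : N2 mul u v a.
  case: Hu => Hu; first by apply: gs_in; left.
  have -> : a = e - u by rewrite Hu opprB addrC subrK.
  by apply: gs_add => //; apply: gs_opp; apply: gs_in; left.
have Nb' : N2 mul u v b.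
  case: Hv => Hv; first by apply: gs_in; right.
  have -> : b = e - v by rewrite Hv opprB addrC subrK.
  by apply: gs_add => //; apply: gs_opp; apply: gs_in; right.
move=> z; split.
  by apply: gs_min; [exact: gs_sub | move=> x [->|->]].
move/span=> [x [y [w ->]]]; rewrite /cmb.
by apply: gs_add; [apply: gs_add|]; apply: gs_scale.
Qed.
End Spec. End Basic.

Theorem lemma3p5 (F : fieldType) (A : lmodType F) (mul : A -> A -> A)
  (a b one : A) :
  (2%:R : F) != 0 ->
  axial_half mul ->
  half_axis mul a -> half_axis mul b -> a != b ->
  is_identity mul (N2 mul a b) one ->
  mul a b = - ((4%:R : F)^-1 *: one) + @halfF F *: a + @halfF F *: b ->
  let N := N2 mul a b in
  let ta := tau mul a in
  let tb := tau mul b in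
  (* (1) and (2), for {x, y} = {a, b} *)
  (has_dim N 3 /\
   forall x y, (x = a /\ y = b) \/ (x = b /\ y = a) ->
     tau mul y x = one - x /\
     (forall z, sub_eigsp mul N x (@halfF F) z <->
                exists c : F, z = c *: (one - 2%:R *: y))) /\
  (* (3) *)
  (fun_order (gprod ta tb) 2 \/ fun_order (gprod ta tb) 4) /\
  (* (4) *)
  (fun_order (gprod ta tb) 2 <->
     (forall z, z = a \/ z = b -> tau mul z = tau mul (one - z))) /\
  (* (5) *)
  (fun_order (gprod ta tb) 4 ->
     gprod ta (tau mul (one - a)) = gprod tb (tau mul (one - b)) /\
     forall h,
       (gen_group (fun g => g = ta \/ g = tb) h /\
        forall k, gen_group (fun g => g = ta \/ g = tb) k -> h \o k = k \o h)
       <-> gen_group (fun g => g = gprod ta (tau mul (one - a))) h) /\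
  (* (6) *)
  (half_axis mul (one - a) /\ half_axis mul (one - b) /\
   forall u v, (u = a \/ u = one - a) -> (v = b \/ v = one - b) ->
     mul u v = - ((4%:R : F)^-1 *: one) + @halfF F *: u + @halfF F *: v /\
     (forall z, N2 mul u v z <-> N z)).
Proof.
move=> H2 [HA _] Ha Hb Hab [HNe Hid] Hmab N ta tb.
have Hea : mul one a = a by apply: Hid; apply: gs_in; left.
have Heb : mul one b = b by apply: Hid; apply: gs_in; right.
have Hee : mul one one = one by apply: Hid.
have Hba : mul b a = - ((4%:R : F)^-1 *: one) + halfF F *: b + halfF F *: a.
  by rewrite (mulC HA b a) Hmab addrAC.
have Hba' : b != a by rewrite eq_sym.
have Nsw : forall z, N2 mul a b z <-> N2 mul b a z.
  by move=> z; split; apply: gs_ext => x /=; tauto.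
have HNe' : N2 mul b a one by apply/Nsw.
have tab1 : tau mul a b = one - b by apply: (tab HA H2 (e := one) (a := a) (b := b)).
have tba1 : tau mul b a = one - a by apply: (tab HA H2 (e := one) (a := b) (b := a)).
have tbe1 : tau mul b one = one by apply: (tae HA H2 (e := one) (a := b) (b := a)).
have tbb1 : tau mul b b = b by apply: (taa HA H2 (a := b)).
have ia : forall x, ta (ta x) = x by move=> x; apply: tau_inv.
have ib : forall x, tb (tb x) = x by move=> x; apply: tau_inv.
have Tea : tau mul (one - a) = (fun x => tb (ta (tb x))).
  apply: functional_extensionality => x; rewrite -tba1.
  exact: (tau_conj HA H2 x Hb Ha).
have Teb : tau mul (one - b) = (fun x => ta (tb (ta x))).
  apply: functional_extensionality => x; rewrite -tab1.
  exact: (tau_conj HA H2 x Ha Hb).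
have Hab2 : half_axis mul (one - a) by rewrite -tba1; apply: ha_tr.
have Hbb2 : half_axis mul (one - b) by rewrite -tab1; apply: ha_tr.
have Fix : tau mul (one - b) b = b.
  rewrite (tau_spec HA H2 (p := b) (m := 0)) ?subr0 ?addr0 //; last exact: (eig0 HA).
  exists 0, b; rewrite add0r; split=> //; split; first exact: (eig0 HA).
  rewrite /eigsp (mulBr HA) (mulC HA b one) Heb scale0r.
  by case: Hb => -> _; rewrite subrr.
have K : forall y, tb y = tau mul (one - b) (tb (tau mul (one - b) y)).
  by move=> y; have := tau_conj HA H2 y Hbb2 Hb; rewrite Fix.
have K2 : forall y, tau mul (one - b) (tb y) = tb (tau mul (one - b) y).
  by move=> y; rewrite {1}K tau_inv.
have R2 : forall x, tb (ta (tb (ta x))) = ta (tb (ta (tb x))).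
  by move=> x; have := K2 x; rewrite Teb /= => ->.
have Hx0 : tb (ta b) <> b.
  rewrite /ta /tb tab1 (tauB HA H2 _ _ Hb) tbe1 tbb1 => E.
  have := NZe2b HA H2 Ha Hb Hab Hea Heb Hee Hmab.
  by rewrite scaler_nat mulr2n opprD addrA E subrr eqxx.
split.
  split; first by apply: (hasdim HA H2 (e := one) (a := a) (b := b)).
  move=> x y [[-> ->]|[-> ->]]; split => //.
    by move=> z; apply: (eig_half HA H2 (e := one) (a := a) (b := b)).
  have EH : forall z, sub_eigsp mul (N2 mul b a) b (halfF F) z <->
      exists c, z = c *: (one - 2%:R *: a).
    by move=> z; apply: (eig_half HA H2 (e := one) (a := b) (b := a)).
  move=> z; rewrite -EH /sub_eigsp /N.
  by split=> -[Hz Hm]; split=> //; apply/Nsw.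
split; first exact: (G3 ia ib R2 Hx0).
split.
  rewrite (G4 ia ib R2 Hx0); split.
    move=> [Ea Eb] z [->|->]; [rewrite Tea | rewrite Teb];
      apply: functional_extensionality => x; [exact: Ea | exact: Eb].
  move=> H; split=> x.
    by have := congr1 (fun f => f x) (H a (or_introl erefl)); rewrite Tea.
  by have := congr1 (fun f => f x) (H b (or_intror erefl)); rewrite Teb.
split.
  move=> H4; rewrite Tea Teb; split.
    by apply: functional_extensionality => x; rewrite /gprod /= R2.
  exact: (G5 ia ib R2 H4).
split; first by [].
split; first by [].
move=> u v Hu Hv; split.
  case: Hu => ->; case: Hv => ->.
  - exact: Hmab.
  - by apply: (U2 HA H2 (e := one) (a := a) (b := b)).
  - by apply: (U1 HA H2 (e := one) (a := a) (b := b)).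
  - by apply: (U3 HA H2 (e := one) (a := a) (b := b)).
by move=> z; apply: (N2eq HA H2 (e := one) (a := a) (b := b)).
Qed.
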